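(* Let $A\in\mathbb{R}^{n\times n}$ be a lower Hessenberg invertible M-matrix, and let $(M,N)$ be a regular splitting of $A$ such that $M$ is a substitution matrix. Let $M_{AGS}=\operatorname{triu}(A)$ and $N_{AGS}=M_{AGS}-A$. Then \[ \rho(M^{-1}N) \geq \rho(M_{AGS}^{-1}N_{AGS}). \]
   Context: $A$ is lower Hessenberg if $A_{ij}=0$ whenever $j>i+1$. A regular splitting of $A$ is a pair $(M,N)$ with $M$ an invertible M-matrix, $N\geq 0$ entrywise, and $A=M-N$. A permutation $v=(i_1,\dots,i_n)$ of $(1,\dots,n)$ is a substitution order for $M\in\mathbb{R}^{n\times n}$ if $M_{ij}=0$ whenever $j$ comes after $i$ in the list $v$; $M$ is a substitution matrix if it admits a substitution order. $\operatorname{triu}(A)$ is the upper triangular part of $A$ including the diagonal. $\rho(\cdot)$ denotes the spectral radius. *)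

(* Defs.v *)
From HB Require Import structures.
From mathcomp Require Import all_boot all_order all_algebra all_fingroup.
From mathcomp Require Import complex.
Set Implicit Arguments. Unset Strict Implicit. Unset Printing Implicit Defensive.
Import Order.TTheory GRing.Theory Num.Theory.
Local Open Scope ring_scope.

Section Defs.
Variable R : rcfType.
Variable n : nat.

Definition cmx (A : 'M[R]_n) : 'M[R[i]]_n := map_mx (fun x : R => x%:C%C) A.

Definition eigenvalues (A : 'M[R]_n) : seq R[i] :=
  sval (closed_field_poly_normal (char_poly (cmx A))).

Definition spectral_radius (A : 'M[R]_n) : R :=
  \big[Num.max/0]_(z <- eigenvalues A) complex.Re `|z|.

Definition nonneg_mx (B : 'M[R]_n) : Prop := forall i j, 0 <= B i j.

Definition inv_Mmatrix (A : 'M[R]_n) : Prop :=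
  exists (s : R) (B : 'M[R]_n),
    nonneg_mx B /\ A = s%:M - B /\ spectral_radius B < s.

Definition lower_hessenberg (A : 'M[R]_n) : Prop :=
  forall i j : 'I_n, (i.+1 < j)%N -> A i j = 0.

Definition regular_splitting (A M N : 'M[R]_n) : Prop :=
  inv_Mmatrix M /\ nonneg_mx N /\ A = M - N.

(* The permutation s : 'S_n encodes the list v = (s 0, s 1, ..., s (n-1));
   the position of k in v is s^-1 k.  v is a substitution order for M if
   M i j = 0 whenever j comes after i in v. *)
Definition substitution_order (M : 'M[R]_n) (s : 'S_n) : Prop :=
  forall i j : 'I_n, ((s^-1)%g i < (s^-1)%g j)%N -> M i j = 0.

Definition substitution_matrix (M : 'M[R]_n) : Prop :=
  exists s : 'S_n, substitution_order M s.

Definition triu (A : 'M[R]_n) : 'M[R]_n :=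
  \matrix_(i, j) (if (i <= j)%N then A i j else 0).

End Defs.

(* Main.v *)
Require Import Defs.
From HB Require Import structures.
From mathcomp Require Import all_boot all_order all_algebra all_fingroup.
From mathcomp Require Import complex.
From mathcomp Require Import polyrcf.
From mathcomp Require Import lra.
Import Order.TTheory GRing.Theory Num.Theory.
Set Implicit Arguments. Unset Strict Implicit. Unset Printing Implicit Defensive.
Local Open Scope complex_scope.
Local Open Scope ring_scope.

Section Aux.
Variable R : rcfType.

Lemma monic_big (q : {poly R}) : q \is monic ->
  exists n0, forall x, n0 <= x -> 1 <= q.[x].
Proof.
move=> mq; have := @poly_pinfty_gt_lc R q; rewrite (monicP mq) ltr01.
by case=> // n0 h; exists n0.
Qed.

Lemma monic_pos (q : {poly R}) t : q \is monic ->
  (forall s, t <= s -> ~~ root q s) -> forall s, t <= s -> 0 < q.[s].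
Proof.
move=> mq hr s ts; rewrite ltNge; apply/negP => qs.
have [n0 hn0] := monic_big mq.
have sx : s <= Num.max s n0 by rewrite le_max lexx.
have hx : 1 <= q.[Num.max s n0] by apply: hn0; rewrite le_max lexx orbT.
have hm : q.[s] <= 0 <= q.[Num.max s n0] by rewrite qs (le_trans ler01 hx).
have [y /andP[h1 _] ry] := poly_ivt sx hm.
by move: (hr y (le_trans ts h1)); rewrite ry.
Qed.

Lemma last_root (q : {poly R}) s1 : q \is monic -> q.[s1] <= 0 ->
  exists y, [/\ s1 <= y, root q y & forall z, y < z -> 0 < q.[z]].
Proof.
move=> mq qs1.
have [n0 hn0] := monic_big mq.
pose x0 := Num.max n0 s1 + 1.
have hx0 : Num.max n0 s1 < x0 by rewrite /x0 ltrDl ltr01.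
have s1x0 : s1 < x0 by apply: le_lt_trans hx0; rewrite le_max lexx orbT.
have n0x0 : n0 <= x0 by apply: ltW; apply: le_lt_trans hx0; rewrite le_max lexx.
have qx0 : 1 <= q.[x0] by apply: hn0.
have hbig : forall z, x0 <= z -> 0 < q.[z].
  by move=> z hz; apply: lt_le_trans ltr01 _; apply: hn0; apply: le_trans hz.
have hm : q.[s1] <= 0 <= q.[x0] by rewrite qs1 (le_trans ler01 qx0).
have [r0 /andP[r0a r0b] rr0] := poly_ivt (ltW s1x0) hm.
have r0x0 : r0 < x0.
  rewrite lt_neqAle r0b andbT; apply/negP => /eqP e; move: rr0.
  by rewrite /root e gt_eqF // (lt_le_trans ltr01 qx0).
case: (prev_rootP q (s1 - 1) x0).
- by move=> q0; move: qx0; rewrite q0 horner0 ler10.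
- move=> y _ qy hy hno; exists y; split.
  + rewrite leNgt; apply/negP => ys1.
    have : r0 \in `]y, x0[ by rewrite in_itv /= r0x0 andbT (lt_le_trans ys1 r0a).
    by move/hno; rewrite rr0.
  + by apply/rootP.
  + move=> z yz; have [zx|xz] := ltP z x0; last by apply: hbig.
    rewrite ltNge; apply/negP => qz.
    have hm2 : q.[z] <= 0 <= q.[x0] by rewrite qz (le_trans ler01 qx0).
    have [w /andP[w1 w2] rw] := poly_ivt (ltW zx) hm2.
    have wx0 : w < x0.
      rewrite lt_neqAle w2 andbT; apply/negP => /eqP e; move: rw.
      by rewrite /root e gt_eqF // (lt_le_trans ltr01 qx0).
    have : w \in `]y, x0[ by rewrite in_itv /= wx0 andbT (lt_le_trans yz w1).
    by move/hno; rewrite rw.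
- move=> c _ _ hno.
  have : r0 \in `](s1 - 1), x0[.
    by rewrite in_itv /= r0x0 andbT (lt_le_trans _ r0a) // gtrDl ltrN10.
  by move/hno; rewrite rr0.
Qed.


Definition nnm m p (X : 'M[R]_(m,p)) := forall i j, 0 <= X i j.

Lemma nnmM m p r (X : 'M[R]_(m,p)) (Y : 'M[R]_(p,r)) :
  nnm X -> nnm Y -> nnm (X *m Y).
Proof. by move=> hX hY i j; rewrite mxE; apply: sumr_ge0 => k _; apply: mulr_ge0. Qed.

Lemma nnmD m p (X Y : 'M[R]_(m,p)) : nnm X -> nnm Y -> nnm (X + Y).
Proof. by move=> hX hY i j; rewrite mxE; apply: addr_ge0. Qed.

Lemma char_horner n (A : 'M[R]_n) s : (char_poly A).[s] = \det (s%:M - A).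
Proof.
symmetry; rewrite horner_sum; apply: eq_bigr => p _.
rewrite hornerM horner_exp !hornerE; congr (_ * _).
rewrite (big_morph _ (fun p q => hornerM p q s) (hornerC 1 s)).
by apply: eq_bigr => i _; rewrite !mxE !(hornerE, hornerMn).
Qed.

Lemma det11 (X : 'M[R]_1) : \det X = X 0 0.
Proof. by rewrite {1}[X]mx11_scalar det_scalar1. Qed.

Lemma mul11 p (X : 'M[R]_(1,1)) (Y : 'M[R]_(1,p)) j : (X *m Y) 0 j = X 0 0 * Y 0 j.
Proof. by rewrite mxE big_ord1. Qed.

Lemma det_schur n (a : 'M[R]_1) (b : 'M[R]_(1,n)) (c : 'M[R]_(n,1)) (D : 'M[R]_n) :
  D \in unitmx -> \det (block_mx a b c D) = \det D * \det (a - b *m invmx D *m c).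
Proof.
move=> uD.
have -> : block_mx a b c D = block_mx 1%:M (b *m invmx D) 0 1%:M *m
                              block_mx (a - b *m invmx D *m c) 0 c D.
  rewrite mulmx_block !mul1mx !mul0mx ?mulmx0 !add0r ?addr0 mulmxKV //.
  by rewrite subrK.
by rewrite det_mulmx det_ublock det_lblock !det1 !mul1r mulrC.
Qed.


Lemma mxDE m p (X Y : 'M[R]_(m,p)) i j : (X + Y) i j = X i j + Y i j.
Proof. by rewrite mxE. Qed.
Lemma mxNE m p (X : 'M[R]_(m,p)) i j : (- X) i j = - X i j.
Proof. by rewrite mxE. Qed.
Lemma mxBE m p (X Y : 'M[R]_(m,p)) i j : (X - Y) i j = X i j - Y i j.
Proof. by rewrite !mxE. Qed.
Lemma mxsE m (s : R) (i : 'I_m) : (s%:M) i i = s.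
Proof. by rewrite mxE eqxx mulr1n. Qed.

Lemma nnm_col n1 n2 p (X : 'M[R]_(n1,p)) (Y : 'M[R]_(n2,p)) :
  nnm X -> nnm Y -> nnm (col_mx X Y).
Proof. by move=> hX hY i j; case: (split_ordP i) => k ->; rewrite ?col_mxEu ?col_mxEd. Qed.

Lemma Kstep n (IH : forall (D : 'M[R]_n) t, nnm D ->
     (forall s, t <= s -> 0 < \det (s%:M - D)) ->
     (t%:M - D) \in unitmx /\ nnm (invmx (t%:M - D)))
  (T : 'M[R]_(1 + n)) t : nnm T -> (forall s, t <= s -> 0 < \det (s%:M - T)) ->
  (t%:M - T) \in unitmx /\ nnm (invmx (t%:M - T)).
Proof.
move=> hT hpos.
set a := ulsubmx T; set b := ursubmx T; set c := dlsubmx T; set D := drsubmx T.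
have ha : nnm a by move=> i j; rewrite /a !mxE; apply: hT.
have hb : nnm b by move=> i j; rewrite /b !mxE; apply: hT.
have hc : nnm c by move=> i j; rewrite /c !mxE; apply: hT.
have hD : nnm D by move=> i j; rewrite /D !mxE; apply: hT.
have hdec : forall s, s%:M - T = block_mx (s%:M - a) (- b) (- c) (s%:M - D).
  move=> s; rewrite -{1}[T]submxK (scalar_mx_block 1 n) opp_block_mx add_block_mx.
  by rewrite !add0r.
have hschur : forall s, (s%:M - D) \in unitmx ->
   \det (s%:M - T) = \det (s%:M - D) * (s - a 0 0 - (b *m invmx (s%:M - D) *m c) 0 0).
  move=> s u; rewrite hdec det_schur // det11 !mulNmx !mulmxN opprK.
  by congr (_ * _); rewrite !mxE eqxx mulr1n.
have claim1 : forall s, t <= s -> 0 < \det (s%:M - D).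
  move=> s1 ts1; rewrite ltNge; apply/negP => hs1.
  have hq : (char_poly D).[s1] <= 0 by rewrite char_horner.
  have [y [s1y /rootP ry hy]] := @last_root (char_poly D) s1 (char_poly_monic D) hq.
  pose f := char_poly T - ('X - (a 0 0)%:P) * char_poly D.
  have fy : 0 < f.[y].
    rewrite /f !hornerE ry mulr0 subr0 char_horner; apply: hpos.
    exact: le_trans ts1 s1y.
  have fz : forall z, y < z -> f.[z] <= 0.
    move=> z yz.
    have hz : forall s, z <= s -> 0 < \det (s%:M - D).
      by move=> s zs; rewrite -char_horner; apply: hy; apply: lt_le_trans zs.
    have [uz nz] := IH D z hD hz.
    rewrite /f !hornerE !char_horner hschur // subr_le0 [X in _ <= X]mulrC.
    apply: ler_wpM2l; first exact: ltW (hz z (lexx z)).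
    have := nnmM (nnmM hb nz) hc 0 0; lra.
  have [d d0 hd] := poly_cont y f fy.
  have h1 : f.[y + d / 2] <= 0 by apply: fz; lra.
  have h2 : `|y + d / 2 - y| < d by rewrite ger0_norm; lra.
  by move: (hd _ h2); rewrite ltr_distl => /andP[h3 _]; lra.
have [uD nW] := IH D t hD claim1.
set W := invmx (t%:M - D) in nW.
set sg := t - a 0 0 - (b *m W *m c) 0 0.
have hsg : 0 < sg.
  by have := hpos t (lexx t); rewrite hschur // pmulr_rgt0 // claim1.
have uT : (t%:M - T) \in unitmx by rewrite unitmxE unitfE gt_eqF // hpos.
split=> //.
have key : forall v : 'cV[R]_(1 + n), nnm v -> nnm (invmx (t%:M - T) *m v).
  move=> v hv.
  set x := invmx (t%:M - T) *m v.
  have hx : (t%:M - T) *m x = v by rewrite /x mulKVmx.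
  rewrite -[x]vsubmxK in hx *.
  rewrite -[v]vsubmxK hdec mul_block_col in hx.
  case/eq_col_mx: hx => h1 h2.
  set x0 := usubmx x in h1 h2 *; set x' := dsubmx x in h1 h2 *.
  have hv0 : nnm (usubmx v) by move=> i j; rewrite mxE.
  have hv' : nnm (dsubmx v) by move=> i j; rewrite mxE.
  have ex' : x' = W *m (dsubmx v + c *m x0).
    by rewrite -h2 mulNmx [- _ + _]addrC subrK mulKmx.
  have hx0 : nnm x0.
    have e1 := congr1 (fun M : 'cV[R]_1 => M 0 0) h1; move: e1 => /=.
    rewrite ex' !mulmxDr !mulmxA !mulNmx !mxDE ?mxNE ?mul11 ?mxNE ?mxBE ?mxsE ?mxDE ?mxNE => e1.
    have w1 := nnmM (nnmM hb nW) hv' 0 0.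
    have w2 := hv0 0 0.
    have : 0 <= sg * x0 0 0 by rewrite /sg; nra.
    rewrite pmulr_rge0 // => h.
    by move=> i j; rewrite !ord1.
  apply: nnm_col => //.
  by rewrite ex'; apply: nnmM => //; apply: nnmD => //; apply: nnmM.
have hdelta : forall j, nnm (delta_mx j (0 : 'I_1) : 'cV[R]_(1 + n)).
  by move=> j k l; rewrite mxE ler0n.
by move=> i j; have := key _ (hdelta j) i 0; rewrite -colE mxE.
Qed.


Lemma Kpos n (T : 'M[R]_n) t : nnm T -> (forall s, t <= s -> 0 < \det (s%:M - T)) ->
  (t%:M - T) \in unitmx /\ nnm (invmx (t%:M - T)).
Proof.
elim: n T t => [|n IH] T t hT hpos.
  split; first by rewrite unitmxE det_mx00 unitr1.
  by move=> [].
exact: (@Kstep n IH T t hT hpos).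
Qed.

End Aux.

Section Aux2.
Variable R : rcfType.

Lemma big_max_ge (l : seq R[i]) z : z \in l ->
  complex.Re `|z| <= \big[Num.max/0]_(y <- l) complex.Re `|y|.
Proof.
elim: l => // a l IH; rewrite in_cons big_cons le_max => /orP[/eqP ->|hz].
  by rewrite lexx.
by rewrite IH ?orbT.
Qed.

Lemma big_max_ge0 (l : seq R[i]) : 0 <= \big[Num.max/0]_(y <- l) complex.Re `|y|.
Proof. by elim: l => [|a l IH]; rewrite ?big_nil ?big_cons ?lexx // le_max IH orbT. Qed.

Lemma big_max_lt (l : seq R[i]) mu : 0 < mu -> (forall z, z \in l -> complex.Re `|z| < mu) ->
  \big[Num.max/0]_(y <- l) complex.Re `|y| < mu.
Proof.
move=> mu0; elim: l => [|a l IH] h; first by rewrite big_nil.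
rewrite big_cons gt_max h ?mem_head //= IH // => z hz; apply: h.
by rewrite in_cons hz orbT.
Qed.

Lemma eig_root n (A : 'M[R]_n) z : (z \in eigenvalues A) = root (char_poly (cmx A)) z.
Proof.
rewrite /eigenvalues; case: closed_field_poly_normal => r /= hr.
by rewrite [in RHS]hr (monicP (char_poly_monic _)) scale1r root_prod_XsubC.
Qed.

Lemma nC (x : R[i]) : `|x| = (complex.Re `|x|)%:C.
Proof.
have := ger0_Im (normr_ge0 x); case: `|x| => a b /= ->; by [].
Qed.

Lemma ReC (x : R) : complex.Re (x%:C) = x. Proof. by []. Qed.

Lemma reC_norm (s : R) : s <= complex.Re `|s%:C|.
Proof.
have [s0|s0] := leP 0 s.
  by rewrite ger0_norm ?ler0c //=.
apply: le_trans (ltW s0) _; have := normr_ge0 (s%:C); rewrite lecE => /andP[_ h]; exact: h.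
Qed.

Lemma real_eig n (A : 'M[R]_n) s : root (char_poly A) s -> s%:C \in eigenvalues A.
Proof.
move=> hs; rewrite eig_root.
have -> : cmx A = map_mx (real_complex R) A by [].
by rewrite -map_char_poly rootE horner_map (rootP hs) rmorph0.
Qed.

Lemma K_rho n (T : 'M[R]_n) t : nnm T -> spectral_radius T < t ->
  (t%:M - T) \in unitmx /\ nnm (invmx (t%:M - T)).
Proof.
move=> hT hr; apply: Kpos => // s ts.
rewrite -char_horner; apply: (@monic_pos _ _ t (char_poly_monic T)) => // s' ts'.
apply/negP => /real_eig /big_max_ge h.
have := reC_norm s'; rewrite /spectral_radius in hr; lra.
Qed.


Definition Nc (x : R[i]) := complex.Re `|x|.

Lemma Nc_ge0 x : 0 <= Nc x.
Proof. by have := normr_ge0 x; rewrite lecE => /andP[_ h]; exact: h. Qed.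

Lemma Nc_mul x y : Nc (x * y) = Nc x * Nc y.
Proof. by rewrite /Nc normrM {1}(nC x) {1}(nC y) -rmorphM. Qed.

Lemma ReD (x y : R[i]) : complex.Re (x + y) = complex.Re x + complex.Re y.
Proof. by case: x; case: y. Qed.

Lemma Nc_add x y : Nc (x + y) <= Nc x + Nc y.
Proof. by have := ler_normD x y; rewrite lecE ReD => /andP[_ h]; exact: h. Qed.

Lemma Nc_opp x : Nc (- x) = Nc x.
Proof. by rewrite /Nc normrN. Qed.

Lemma Nc_sub x y : Nc (x - y) <= Nc x + Nc y.
Proof. by rewrite -(Nc_opp y); apply: Nc_add. Qed.

Lemma Nc_real (r : R) : Nc (r%:C) = `|r|.
Proof.
have [r0|r0] := leP 0 r.
  by rewrite /Nc !ger0_norm ?ler0c.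
rewrite /Nc -normrN -rmorphN ger0_norm ?ler0c ?oppr_ge0 ?ltW //= ltr0_norm //.
Qed.

Lemma Nc_sum (I : Type) (r : seq I) (P : pred I) (F : I -> R[i]) :
  Nc (\sum_(j <- r | P j) F j) <= \sum_(j <- r | P j) Nc (F j).
Proof.
elim/big_rec2: _ => [|j a b _ h]; first by rewrite /Nc normr0.
by apply: le_trans (Nc_add _ _) _; rewrite lerD2l.
Qed.

Lemma Nc_gt0 x : x != 0 -> 0 < Nc x.
Proof.
move=> x0; have := normr_gt0 x; rewrite x0 ltcE => /andP[_ h]; exact: h.
Qed.


Lemma CW n (U L : 'M[R]_n) (u : 'rV[R]_n) (mu : R) (z : R[i]) (w : 'rV[R[i]]_n) :
  (forall i j, i != j -> U i j <= 0) -> (forall i, 0 <= U i i) -> nnm L ->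
  (forall j, 0 < u 0 j) -> 0 < mu ->
  (forall j, (u *m L) 0 j < mu * (u *m U) 0 j) ->
  w != 0 -> w *m cmx L = z *: (w *m cmx U) -> complex.Re `|z| < mu.
Proof.
move=> hU hUd hL hu mu0 hX w0 hw.
rewrite -/(Nc z); set nz := Nc z.
have [j0 hj0] : exists j0, w 0 j0 != 0.
  case: (pickP (fun j => w 0 j != 0)) => [j0 h|hno]; first by exists j0.
  move/negP: w0; case; apply/eqP/matrixP => i j; rewrite ord1 mxE.
  by move/negbFE/eqP: (hno j).
pose F j := Nc (w 0 j) / u 0 j.
case: (@arg_maxP _ _ _ j0 predT F isT) => i _ hi.
set c := F i.
have hc : forall j, Nc (w 0 j) <= c * u 0 j.
  by move=> j; rewrite -ler_pdivrMr //; apply: hi.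
have c0 : 0 < c.
  apply: lt_le_trans (hi j0 isT); rewrite /F divr_gt0 //; exact: Nc_gt0.
have wi : Nc (w 0 i) = c * u 0 i by rewrite /c /F divfK // gt_eqF.
have e := congr1 (fun M : 'rV[R[i]]_n => M 0 i) hw; move: e => /=.
rewrite !mxE => e.
rewrite [X in _ = _ * X](bigD1 i) //= in e.
set SL := \sum_j _ in e; set S' := \sum_(j | _) _ in e.
have e' : z * (w 0 i * cmx U i i) = SL - z * S' by rewrite e mulrDr addrK.
have hN := Nc_sub SL (z * S'); rewrite -e' !Nc_mul mxE Nc_real ger0_norm // in hN.
have hSL : Nc SL <= c * (u *m L) 0 i.
  apply: le_trans (Nc_sum _ _ _) _; rewrite mxE mulr_sumr; apply: ler_sum => j _.
  by rewrite /= Nc_mul mxE Nc_real ger0_norm // mulrA; apply: ler_wpM2r.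
set P := \sum_(j | j != i) u 0 j * - U j i.
have hS' : Nc S' <= c * P.
  apply: le_trans (Nc_sum _ _ _) _; rewrite mulr_sumr; apply: ler_sum => k hk.
  have hk' : U k i <= 0 by exact: hU hk.
  rewrite /= Nc_mul mxE Nc_real (ler0_norm hk') (mulrA c).
  by apply: ler_wpM2r; [rewrite oppr_ge0 | apply: hc].
have huU : (u *m U) 0 i = u 0 i * U i i - P.
  rewrite mxE (bigD1 i) //= /P -sumrN; congr (_ + _).
  by apply: eq_bigr => k _; lra.
have huL : 0 <= (u *m L) 0 i.
  by rewrite mxE; apply: sumr_ge0 => j _; apply: mulr_ge0 => //; apply: ltW.
have hXi := hX i.
have nz0 : 0 <= nz := Nc_ge0 z.
have hP : 0 <= P.
  by apply: sumr_ge0 => j hj; apply: mulr_ge0; [apply: ltW | rewrite oppr_ge0 hU // eq_sym].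
have ui0 := hu i; have Uii := hUd i.
rewrite ltNge; apply/negP => hmu.
have h1 : nz * (Nc S') <= nz * (c * P) by apply: ler_wpM2l.
have h2 : nz * ((u *m U) 0 i) <= (u *m L) 0 i.
  rewrite huU; move: hN; rewrite wi => hN.
  have h3 : c * (nz * (u 0 i * U i i - P)) <= c * (u *m L) 0 i by nra.
  by rewrite ler_pM2l // in h3.
have huU0 : 0 < (u *m U) 0 i by nra.
nra.
Qed.

End Aux2.

Section Comb.
Variable R : rcfType.
Variable n : nat.
Variable sg : 'S_n.

Definition posn (l : nat) : nat :=
  if (insub l : option 'I_n) is Some o then val ((sg^-1)%g o) else 0%N.
Definition ascn (l : nat) : nat := ((l.+1 < n) && (posn l < posn l.+1))%N.
Definition cntn (k : nat) : nat := (\sum_(0 <= l < k) ascn l)%N.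

Lemma posnE (o : 'I_n) : posn o = (sg^-1)%g o.
Proof. by rewrite /posn valK. Qed.

Lemma cntn_split a b : (a <= b)%N -> cntn b = (cntn a + \sum_(a <= l < b) ascn l)%N.
Proof. by move=> ab; rewrite /cntn (@big_cat_nat _ _ _ a 0 b _ _ (leq0n a) ab). Qed.

Lemma chain j m : (j + m < n)%N -> (\sum_(j <= l < j + m) ascn l)%N = 0%N ->
  (posn (j + m) <= posn j)%N.
Proof.
elim: m => [|m IH] hjm hs; first by rewrite addn0.
rewrite addnS in hjm *; rewrite addnS big_nat_recr /= ?leq_addr // in hs.
move/eqP: hs; rewrite addn_eq0 => /andP[/eqP h1 h2].
have h3 := IH (ltnW hjm) h1.
move: h2; rewrite /ascn hjm /= eqb0 -leqNgt => h2.
exact: leq_trans h2 h3.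
Qed.


Lemma core (A M N : 'M[R]_n) mu :
  lower_hessenberg A -> (forall i j, i != j -> A i j <= 0) ->
  substitution_order M sg -> nnm N -> A = M - N -> 0 < mu -> mu <= 1 ->
  forall i j : 'I_n, (mu *: M - N) i j * mu ^+ cntn j <=
    (mu *: triu A - (triu A - A)) i j * mu ^+ cntn i.
Proof.
move=> hH hAz hM hN eA mu0 mu1 i j.
have eN : N i j = M i j - A i j by rewrite eA !mxE; lra.
have eY : (mu *: M - N) i j = mu * M i j - N i j by rewrite !mxE.
have eX : (mu *: triu A - (triu A - A)) i j = if (i <= j)%N then mu * A i j else A i j.
  by rewrite !mxE; case: ifP => _; lra.
have hNij := hN i j.
have Y2 : (mu *: M - N) i j <= mu * A i j by rewrite eY; nra.
have Y1 : (posn i < posn j)%N -> (mu *: M - N) i j = A i j.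
  by move=> h; rewrite eY eN hM ?mulr0 ?sub0r ?opprB ?subr0 -?posnE //; lra.
have d0 : forall k, 0 <= mu ^+ k by move=> k; apply: exprn_ge0; apply: ltW.
rewrite eX.
case: (ltngtP i j) => hij.
-   case: (ltnP i.+1 j) => hij2.
  + rewrite hH // mulr0 mul0r.
    have := d0 (cntn j); rewrite hH // mulr0 in Y2; nra.
  + have ej : val j = i.+1 by apply/eqP; rewrite eqn_leq hij2 hij.
    rewrite (cntn_split (ltnW hij)) ej big_nat1.
    have ea : ascn i = (posn i < posn j)%N.
      by rewrite /ascn -ej ltn_ord.
    rewrite ea; case hp: (posn i < posn j)%N => /=.
    * by rewrite Y1 // addn1 exprS mulrA [A i j * mu]mulrC.
    * by rewrite addn0; apply: ler_wpM2r.
- rewrite (cntn_split (ltnW hij)).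
  set S := (\sum_(j <= l < i) ascn l)%N.
  case eS : S => [|S'].
  + have hji : (j + (i - j) < n)%N by rewrite subnKC ?ltn_ord // ltnW.
    have hc := @chain j (i - j) hji.
    rewrite subnKC ?(ltnW hij) // in hc; have := hc eS; rewrite leq_eqVlt.
    case/orP => [|hp]; last by rewrite Y1 // addn0.
    rewrite !posnE => /eqP/val_inj/perm_inj ej.
    by move: hij; rewrite ej ltnn.
  + have hS : mu ^+ (cntn j + S'.+1) <= mu * mu ^+ cntn j.
      rewrite exprD exprS mulrCA; apply: ler_wpM2l; first exact: ltW.
      rewrite -[X in _ <= X]mulr1; apply: ler_wpM2l => //.
      by apply: exprn_ile1 => //; apply: ltW.
    have hne : i != j by rewrite neq_ltn hij orbT.
    have hA := hAz i j hne.
    have := d0 (cntn j); nra.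
- have ej : i = j by apply: val_inj.
  subst j; apply: ler_wpM2r => //.
Qed.

End Comb.

Section Main.
Variable R : rcfType.

Lemma cmxE n (X : 'M[R]_n) : cmx X = map_mx (real_complex R) X.
Proof. by []. Qed.

Lemma eig_pencil n (U L : 'M[R]_n) z : U \in unitmx ->
  z \in eigenvalues (invmx U *m L) ->
  exists2 w : 'rV[R[i]]_n, w != 0 & w *m cmx L = z *: (w *m cmx U).
Proof.
move=> uU; rewrite eig_root -eigenvalue_root_char => /eigenvalueP [v hv v0].
have uC : cmx U \in unitmx by rewrite cmxE map_unitmx.
exists (v *m invmx (cmx U)).
  apply: contra v0 => /eqP w0; apply/eqP.
  by rewrite -(mulmxKV uC v) w0 mul0mx.
have e : cmx (invmx U *m L) = invmx (cmx U) *m cmx L.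
  by rewrite !cmxE map_mxM map_invmx.
by rewrite mulmxKV // -mulmxA -e hv.
Qed.

Lemma rho_pencil n (U L : 'M[R]_n) (u : 'rV[R]_n) mu :
  U \in unitmx -> (forall i j, i != j -> U i j <= 0) -> (forall i, 0 <= U i i) ->
  nnm L -> (forall j, 0 < u 0 j) -> 0 < mu ->
  (forall j, (u *m L) 0 j < mu * (u *m U) 0 j) ->
  spectral_radius (invmx U *m L) < mu.
Proof.
move=> uU hU hUd hL hu mu0 hX; rewrite /spectral_radius; apply: big_max_lt => // z hz.
have [w w0 hw] := eig_pencil uU hz.
exact: CW hU hUd hL hu mu0 hX w0 hw.
Qed.

Lemma ar1 (p y x d1 d2 : R) : 0 <= p -> y * d1 <= x * d2 -> p * y * d1 <= p * d2 * x.
Proof. by move=> h1 h2; rewrite -mulrA -mulrA [d2 * x]mulrC; apply: ler_wpM2l. Qed.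

Lemma ar2 (d x y mu : R) : 0 < d -> d <= mu * x - y -> y < mu * x.
Proof. by move=> h1 h2; lra. Qed.

Lemma pick_mu (rT r0 : R) : 0 <= rT -> rT < r0 -> rT < 1 ->
  exists mu, [/\ 0 < mu, mu <= 1, rT < mu & mu < r0].
Proof.
move=> h0 h1 h2; exists ((rT + Num.min r0 1) / 2).
have h3 : Num.min r0 1 <= r0 by rewrite ge_min lexx.
have h4 : Num.min r0 1 <= 1 by rewrite ge_min lexx orbT.
have h5 : rT < Num.min r0 1 by rewrite lt_min h1 h2.
split; lra.
Qed.

End Main.


Unset Implicit Arguments.
Local Close Scope complex_scope.
Local Open Scope ring_scope.

Theorem theorem5 (R : rcfType) (n : nat) (A M N : 'M[R]_n) :
  lower_hessenberg A -> inv_Mmatrix A ->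
  regular_splitting A M N -> substitution_matrix M ->
  spectral_radius (invmx (triu A) *m (triu A - A))
    <= spectral_radius (invmx M *m N).
Proof.
move=> hH [sA [BA [hBA [eA hrA]]]] [[sM [BM [hBM [eM hrM]]]] [hN eAMN]] [sg hsg].
have [uA nA] := K_rho hBA hrA; rewrite -eA in uA nA.
have [uM nM] := K_rho hBM hrM; rewrite -eM in uM nM.
have hAz : forall i j, i != j -> A i j <= 0.
  by move=> i j hij; rewrite eA !mxE (negPf hij) mulr0n sub0r oppr_le0 hBA.
have hT : nnm (invmx M *m N) := nnmM nM hN.
pose one : 'rV[R]_n := const_mx 1.
have c1pos : nnm one by move=> i j; rewrite mxE ler01.
have o1 : forall j, one 0 j = 1 by move=> j; rewrite /one mxE.
have hrT1 : spectral_radius (invmx M *m N) < 1.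
  have hv : nnm (one *m invmx A *m N) := nnmM (nnmM c1pos nA) hN.
  have eu : one *m invmx A *m M = one + one *m invmx A *m N.
    have eM' : M = A + N by rewrite eAMN subrK.
    by rewrite {1}eM' mulmxDr mulmxKV.
  have euT : one *m invmx A *m M *m (invmx M *m N) =
             one *m invmx A *m N by rewrite mulmxA mulmxK.
  have := @rho_pencil R n 1%:M (invmx M *m N) (one *m invmx A *m M) 1 (unitmx1 _ _).
  rewrite invmx1 mul1mx; apply => //.
  - by move=> i j hij; rewrite mxE (negPf hij) mulr0n.
  - by move=> i; rewrite mxE eqxx mulr1n.
  - by move=> j; rewrite eu mxDE o1; have := hv 0 j; lra.
  - by move=> j; rewrite euT mul1r mulmx1 eu mxDE o1; lra.
rewrite leNgt; apply/negP => hlt.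
have rT0 : 0 <= spectral_radius (invmx M *m N).
  by rewrite /spectral_radius; apply: big_max_ge0.
have [mu [mu0 mu1 hmuT hmu0]] := pick_mu rT0 hlt hrT1.
have [uW nW] := K_rho hT hmuT.
set p := one *m invmx (mu%:M - invmx M *m N) *m invmx M.
have hp : nnm p := nnmM (nnmM c1pos nW) nM.
have pY : p *m (mu *: M - N) = one.
  have e : mu *: M - N = M *m (mu%:M - invmx M *m N).
    by rewrite mulmxBr mul_mx_scalar mulKVmx.
  by rewrite e /p mulmxA mulmxKV // mulmxKV.
have hcore := core hH hAz hsg hN eAMN mu0 mu1.
pose u := \row_k (p 0 k * mu ^+ cntn sg k).
have eX : forall i j, (mu *: triu A - (triu A - A)) i j =
     if (i <= j)%N then mu * A i j else A i j.
  move=> i j; rewrite !mxE; case: ifP => _.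
    by rewrite subrr subr0.
  by rewrite mulr0 !sub0r opprK.
have uE : forall k, u 0 k = p 0 k * mu ^+ cntn sg k by move=> k; rewrite mxE.
have huX : forall j : 'I_n, mu ^+ cntn sg j <= (u *m (mu *: triu A - (triu A - A))) 0 j.
  move=> j.
  have e1 : (p *m (mu *: M - N)) 0 j * mu ^+ cntn sg j = mu ^+ cntn sg j.
    by rewrite pY o1 mul1r.
  rewrite -[X in X <= _]e1 mxE mulr_suml [X in _ <= X]mxE; apply: ler_sum => i _.
  by rewrite uE; apply: ar1; [apply: hp | apply: hcore].
have hu0 : forall j, 0 <= u 0 j.
  move=> j; rewrite uE; apply: mulr_ge0; first exact: hp.
  by apply: exprn_ge0; apply: ltW.
have hXz : forall i j, i != j -> (mu *: triu A - (triu A - A)) i j <= 0.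
  move=> i j hij; rewrite eX; case: ifP => _; last exact: hAz.
  by rewrite pmulr_rle0 //; apply: hAz.
have hposj : forall j, 0 < u 0 j /\ 0 < A j j.
  move=> j; have h1 := huX j.
  have dj : 0 < mu ^+ cntn sg j by apply: exprn_gt0.
  have h2 : (u *m (mu *: triu A - (triu A - A))) 0 j <=
            u 0 j * (mu *: triu A - (triu A - A)) j j.
    rewrite mxE (bigD1 j) //= gerDl; apply: sumr_le0 => i hi.
    by apply: mulr_ge0_le0; [apply: hu0 | apply: hXz].
  rewrite eX leqnn in h2.
  have hprod : 0 < u 0 j * (mu * A j j) by apply: lt_le_trans dj (le_trans h1 h2).
  have uj : 0 < u 0 j.
    rewrite lt_def hu0 andbT; apply: contraTneq hprod => ->.
    by rewrite mul0r ltxx.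
  split => //; move: hprod; rewrite pmulr_rgt0 // pmulr_rgt0 //.
have hUE : forall i j, triu A i j = if (i <= j)%N then A i j else 0.
  by move=> i j; rewrite mxE.
have uU : triu A \in unitmx.
  rewrite -unitmx_tr unitmxE unitfE det_trig.
    rewrite gt_eqF //; apply: prodr_gt0 => i _; rewrite mxE hUE leqnn.
    by case: (hposj i).
  by apply/is_trig_mxP => i j hij; rewrite mxE hUE leqNgt hij.
have hUz : forall i j, i != j -> triu A i j <= 0.
  by move=> i j hij; rewrite hUE; case: ifP => _ //; apply: hAz.
have hUd : forall i, 0 <= triu A i i.
  by move=> i; rewrite hUE leqnn; case: (hposj i) => _ h; apply: ltW.
have hL : nnm (triu A - A).
  move=> i j; rewrite mxBE hUE; case: ifP => hij; first by rewrite subrr.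
  rewrite sub0r oppr_ge0; apply: hAz; apply: contraFneq hij => ->.
  by rewrite leqnn.
have hcond : forall j, (u *m (triu A - A)) 0 j < mu * (u *m triu A) 0 j.
  move=> j; have := huX j; rewrite mulmxBr -scalemxAr mxBE.
  have -> : (mu *: (u *m triu A)) 0 j = mu * (u *m triu A) 0 j by rewrite mxE.
  by apply: ar2; apply: exprn_gt0.
have upos : forall j, 0 < u 0 j by move=> j; case: (hposj j).
have := rho_pencil uU hUz hUd hL upos mu0 hcond.
by move=> h; have := lt_trans h hmu0; rewrite ltxx.
Qed.
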